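(* Let $m\ge2$ and $a,b\in(0,1/m)$. Then $\Sigma_{HC}$ is the natural extension of $\Sigma^+_{HC}$, i.e. $$\Sigma_{HC}=\{\omega\in\{1,\ldots,2m\}^{\mathbb Z}: (\omega_{n-k})_{n\in\mathbb Z^+}\in\Sigma_{HC}^+\text{ for every } k\ge1\}.$$
   Context: $F_a(x)=\frac{x-(i-1)a}{a}$ on $[(i-1)a,ia)$, $i\in\{1,\ldots,m\}$, $F_a(x)=\frac{x-ma}{1-ma}$ on $[ma,1]$. $\Omega_i^+=[(i-1)a,ia)\times[0,1]$ for $i\le m$; $\Omega_i^+=[ma,1]\times[\frac{i-m-1}{m},\frac{i-m}{m})$ for $m+1\le i\le2m-1$; $\Omega_{2m}^+=[ma,1]\times[\frac{m-1}{m},1]$. $f_a(x,y)=(F_a(x),\frac{y}{m}+\frac{i-1}{m})$ on $\Omega_i^+$ for $i\le m$, $f_a(x,y)=(F_a(x),my-i+m+1)$ on $\Omega_i^+$ for $i\ge m+1$. $\Omega_i=\Omega_i^+\times[0,1]$, $f_{a,b}(x,y,z)=(f_a(x,y),(1-mb)z)$ on $\Omega_i$ for $i\le m$, $f_{a,b}(x,y,z)=(f_a(x,y),bz+1-mb+b(i-m-1))$ on $\Omega_i$ for $i\ge m+1$ (a bijection of $[0,1]^3$). $X_a=\bigcap_{n\ge0}f_a^{-n}(\bigcup_i\mathrm{int}\,\Omega_i^+)$, $X_{a,b}=\bigcap_{n\in\mathbb Z}f_{a,b}^{-n}(\bigcup_i\mathrm{int}\,\Omega_i)$; $\pi_a(p)=(\omega_n)_{n\ge0}$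 with $f_a^n(p)\in\mathrm{int}\,\Omega^+_{\omega_n}$, $\pi_{a,b}(p)=(\omega_n)_{n\in\mathbb Z}$ with $f_{a,b}^n(p)\in\mathrm{int}\,\Omega_{\omega_n}$. $\Sigma_{HC}^+=\mathrm{cl}(\pi_a(X_a))$, $\Sigma_{HC}=\mathrm{cl}(\pi_{a,b}(X_{a,b}))$ (closures in product topologies). *)

(* Defs.v *)
From Stdlib Require Import Reals Lra Lia ZArith Arith.
Open Scope R_scope.

Definition floorR (r : R) : Z := Int_part r.

(* F_a : [0,1] -> [0,1]. On [(i-1)a, ia) (i <= m), (x-(i-1)a)/a, with
   i-1 = floor(x/a); on [ma,1], (x-ma)/(1-ma). *)
Definition Fa (m : nat) (a x : R) : R :=
  if Rlt_dec x (INR m * a)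
  then (x - IZR (floorR (x / a)) * a) / a
  else (x - INR m * a) / (1 - INR m * a).

(* index i in {1..2m} of the half-open piece Omega_i^+ containing (x,y) in [0,1]^2 *)
Definition idx (m : nat) (a x y : R) : nat :=
  if Rlt_dec x (INR m * a)
  then S (Z.to_nat (floorR (x / a)))
  else Nat.min (2 * m) (m + 1 + Z.to_nat (floorR (INR m * y))).

Definition fa (m : nat) (a : R) (p : R * R) : R * R :=
  let (x, y) := p in
  let i := idx m a x y in
  (Fa m a x,
   if Nat.leb i m then y / INR m + (INR i - 1) / INR m
   else INR m * y - INR i + INR m + 1).

Definition fab (m : nat) (a b : R) (p : R * R * R) : R * R * R :=
  let '(x, y, z) := p in
  let i := idx m a x y in
  (fa m a (x, y),
   if Nat.leb i m then (1 - INR m * b) * z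
   else b * z + 1 - INR m * b + b * (INR i - INR m - 1)).

Definition intOmegaPlus (m : nat) (a : R) (i : nat) (p : R * R) : Prop :=
  let (x, y) := p in
  if Nat.leb i m then
    (1 <= i)%nat /\ (INR i - 1) * a < x < INR i * a /\ 0 < y < 1
  else
    (i <= 2 * m)%nat /\ INR m * a < x < 1 /\
    (INR i - INR m - 1) / INR m < y < (INR i - INR m) / INR m.

Definition intOmega (m : nat) (a : R) (i : nat) (p : R * R * R) : Prop :=
  let '(x, y, z) := p in intOmegaPlus m a i (x, y) /\ 0 < z < 1.

(* pi_a(X_a): codings of points whose whole forward orbit stays in the
   union of the interiors int Omega_i^+ *)
Definition piXa (m : nat) (a : R) (w : nat -> nat) : Prop :=
  exists p : R * R, forall n : nat, intOmegaPlus m a (w n) (Nat.iter n (fa m a) p).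

(* pi_{a,b}(X_{a,b}): codings of points whose full two-sided orbit
   (f_{a,b} being a bijection, given by a bi-infinite orbit sequence)
   stays in the union of the interiors int Omega_i *)
Definition piXab (m : nat) (a b : R) (w : Z -> nat) : Prop :=
  exists p : Z -> R * R * R,
    (forall n : Z, p (n + 1)%Z = fab m a b (p n)) /\
    (forall n : Z, intOmega m a (w n) (p n)).

(* closure in the product (of discrete) topology: cylinder approximation *)
Definition closure_one (S : (nat -> nat) -> Prop) (w : nat -> nat) : Prop :=
  forall N : nat, exists s, S s /\ forall n : nat, (n <= N)%nat -> s n = w n.

Definition closure_two (S : (Z -> nat) -> Prop) (w : Z -> nat) : Prop :=
  forall N : nat, exists s, S s /\
    forall n : Z, (Z.abs n <= Z.of_nat N)%Z -> s n = w n.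

Definition SigmaHCplus (m : nat) (a : R) : (nat -> nat) -> Prop :=
  closure_one (piXa m a).

Definition SigmaHC (m : nat) (a b : R) : (Z -> nat) -> Prop :=
  closure_two (piXab m a b).

(* Main.v *)
Require Import Defs.
From Stdlib Require Import Reals ZArith Arith Lra Lia.
Open Scope R_scope.

Lemma fst_fab m a b q : fst (fab m a b q) = fa m a (fst q).
Proof. destruct q as [[x y] z]; reflexivity. Qed.

Lemma iter_fa_p m a b (p : Z -> R*R*R) :
  (forall n, p (n + 1)%Z = fab m a b (p n)) ->
  forall (n : nat) j, Nat.iter n (fa m a) (fst (p j)) = fst (p (j + Z.of_nat n)%Z).
Proof.
  intros Hp n; induction n as [|n IH]; intros j.
  - simpl. rewrite Z.add_0_r. reflexivity.
  - simpl Nat.iter. rewrite IH, <- (fst_fab m a b), <- Hp. f_equal. f_equal. lia.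
Qed.

Lemma int_bounds m a i q : intOmega m a i q -> (1 <= i <= 2 * m)%nat.
Proof.
  destruct q as [[x y] z]; unfold intOmega, intOmegaPlus.
  destruct (Nat.leb i m) eqn:E; [apply Nat.leb_le in E | apply Nat.leb_gt in E];
  intros [H _]; lia.
Qed.

Lemma intOmega_plus m a i q : intOmega m a i q -> intOmegaPlus m a i (fst q).
Proof. destruct q as [[x y] z]; unfold intOmega; intros [H _]; exact H. Qed.

Lemma mb_lt1 m b : (1 <= m)%nat -> b < 1 / INR m -> INR m * b < 1.
Proof.
  intros Hm Hb. assert (0 < INR m) by (apply lt_0_INR; lia).
  assert (H2: b * INR m < 1/INR m * INR m) by (apply Rmult_lt_compat_r; lra).
  replace (1/INR m * INR m) with 1 in H2 by (field; lra). lra.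
Qed.

Lemma intplus_unit m a i x y : (1 <= m)%nat -> 0 < a -> INR m * a < 1 ->
  intOmegaPlus m a i (x, y) -> 0 < x < 1 /\ 0 < y < 1.
Proof.
  intros Hm Ha Hma. assert (Hm0 : 0 < INR m) by (apply lt_0_INR; lia).
  unfold intOmegaPlus.
  destruct (Nat.leb i m) eqn:E; [apply Nat.leb_le in E | apply Nat.leb_gt in E].
  - intros [Hi [Hx Hy]]. apply le_INR in Hi. apply le_INR in E. simpl in Hi.
    split; [|lra]. split; nra.
  - intros [Hi [Hx Hy]]. split; [split; nra|].
    assert (H1 : (m + 1 <= i)%nat) by lia. apply le_INR in H1. apply le_INR in Hi.
    rewrite plus_INR, mult_INR in *. simpl in H1, Hi.
    assert (0 <= (INR i - INR m - 1) / INR m).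
    { unfold Rdiv. apply Rmult_le_pos; [lra|]. left. apply Rinv_0_lt_compat; lra. }
    assert ((INR i - INR m) / INR m <= 1).
    { replace 1 with (INR m / INR m) by (field; lra). unfold Rdiv.
      apply Rmult_le_compat_r; [left; apply Rinv_0_lt_compat; lra | lra]. }
    lra.
Qed.

Lemma idx_le m a x y : (1 <= m)%nat -> 0 < a -> (idx m a x y <= 2 * m)%nat.
Proof.
  intros Hm Ha. unfold idx. destruct (Rlt_dec x (INR m * a)) as [H|H]; [|lia].
  unfold floorR. destruct (base_Int_part (x / a)) as [H1 _].
  assert (x / a < INR m).
  { apply (Rmult_lt_reg_r a); [lra|]. unfold Rdiv. rewrite Rmult_assoc, Rinv_l; lra. }
  assert (IZR (Int_part (x / a)) < IZR (Z.of_nat m)) by (rewrite <- INR_IZR_INZ; lra).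
  apply lt_IZR in H2. lia.
Qed.

Lemma z_step m a b x y z : (2 <= m)%nat -> 0 < a -> 0 < b < 1 / INR m ->
  0 < z < 1 -> 0 < snd (fab m a b (x, y, z)) < 1.
Proof.
  intros Hm Ha Hb Hz. pose proof (mb_lt1 m b ltac:(lia) (proj2 Hb)) as Hmb.
  assert (Hm2 : 2 <= INR m) by (apply (le_INR 2); lia).
  pose proof (idx_le m a x y ltac:(lia) Ha) as Hi.
  unfold fab. simpl snd.
  destruct (Nat.leb (idx m a x y) m) eqn:E; [apply Nat.leb_le in E | apply Nat.leb_gt in E].
  - split; nra.
  - apply le_INR in Hi. apply le_INR in E. rewrite mult_INR in Hi. simpl in Hi.
    rewrite S_INR in E. set (u := INR (idx m a x y)) in *.
    assert (0 <= b * (u - INR m - 1)) by (apply Rmult_le_pos; lra).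
    assert (b * (u - INR m - 1) <= b * (INR m - 1)) by (apply Rmult_le_compat_l; lra).
    split; nra.
Qed.

Definition gb (m : nat) (a : R) (q : R * R * R) : R * R * R :=
  let '(x, y, z) := q in (INR m * a + (1 - INR m * a) * x, y / INR m, z).

Definition zs (m : nat) (b : R) : R := (1 - INR m * b) / (1 - b).

Lemma idx_gb m a x y : (2 <= m)%nat -> 0 < a -> INR m * a < 1 -> 0 < x < 1 -> 0 < y < 1 ->
  idx m a (INR m * a + (1 - INR m * a) * x) (y / INR m) = S m.
Proof.
  intros Hm Ha Hma Hx Hy. assert (Hm0 : 0 < INR m) by (apply lt_0_INR; lia).
  unfold idx. destruct (Rlt_dec _ _) as [H|H]; [nra|].
  replace (INR m * (y / INR m)) with y by (field; lra).
  unfold floorR, Int_part.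
  rewrite <- (tech_up y 1) by (simpl; lra). simpl. lia.
Qed.

Lemma fab_gb m a b x y : (2 <= m)%nat -> 0 < a -> INR m * a < 1 -> 0 < b < 1 / INR m ->
  0 < x < 1 -> 0 < y < 1 ->
  fab m a b (gb m a (x, y, zs m b)) = (x, y, zs m b).
Proof.
  intros Hm Ha Hma Hb Hx Hy. assert (Hm0 : 0 < INR m) by (apply lt_0_INR; lia).
  assert (Hm2 : 2 <= INR m) by (apply (le_INR 2); lia).
  pose proof (mb_lt1 m b ltac:(lia) (proj2 Hb)) as Hmb.
  unfold gb, fab, fa. rewrite idx_gb by assumption.
  assert (E : Nat.leb (S m) m = false) by (apply Nat.leb_gt; lia). rewrite E.
  unfold Fa. destruct (Rlt_dec _ _) as [H|H]; [nra|].
  assert (b < 1) by nra. rewrite S_INR. unfold zs. f_equal; [f_equal|]; field; lra.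
Qed.

Lemma gb_inv m a b q : (2 <= m)%nat -> 0 < a -> INR m * a < 1 ->
  0 < fst (fst q) < 1 -> 0 < snd (fst q) < 1 -> snd q = zs m b ->
  0 < fst (fst (gb m a q)) < 1 /\ 0 < snd (fst (gb m a q)) < 1 /\ snd (gb m a q) = zs m b.
Proof.
  intros Hm Ha Hma. destruct q as [[x y] z]; simpl. intros Hx Hy Hz.
  assert (Hm2 : 2 <= INR m) by (apply (le_INR 2); lia).
  split; [split; nra|]. split; [|exact Hz].
  split; [apply Rdiv_lt_0_compat; lra|].
  apply (Rmult_lt_reg_r (INR m)); [lra|]. unfold Rdiv. rewrite Rmult_assoc, Rinv_l; lra.
Qed.

Lemma gb_iter_inv m a b q0 : (2 <= m)%nat -> 0 < a -> INR m * a < 1 ->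
  0 < fst (fst q0) < 1 -> 0 < snd (fst q0) < 1 -> snd q0 = zs m b ->
  forall j, let q := Nat.iter j (gb m a) q0 in
  0 < fst (fst q) < 1 /\ 0 < snd (fst q) < 1 /\ snd q = zs m b.
Proof.
  intros Hm Ha Hma H1 H2 H3 j. induction j as [|j IH]; simpl.
  - auto.
  - destruct IH as [A [B C]]. apply gb_inv; auto.
Qed.

Lemma intOmegaPlus_hi m a i x y : Nat.leb i m = false ->
  intOmegaPlus m a i (x, y) = ((i <= 2 * m)%nat /\ INR m * a < x < 1 /\
    (INR i - INR m - 1) / INR m < y < (INR i - INR m) / INR m).
Proof. intros E. unfold intOmegaPlus. rewrite E. reflexivity. Qed.

Lemma int_gb m a b q : (2 <= m)%nat -> 0 < a -> INR m * a < 1 -> 0 < b < 1 / INR m ->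
  0 < fst (fst q) < 1 -> 0 < snd (fst q) < 1 -> snd q = zs m b ->
  intOmega m a (S m) (gb m a q).
Proof.
  intros Hm Ha Hma Hb. destruct q as [[x y] z]; simpl. intros Hx Hy Hz. subst z.
  assert (Hm0 : 0 < INR m) by (apply lt_0_INR; lia).
  assert (Hm2 : 2 <= INR m) by (apply (le_INR 2); lia).
  pose proof (mb_lt1 m b ltac:(lia) (proj2 Hb)) as Hmb.
  change (intOmegaPlus m a (S m) (INR m * a + (1 - INR m * a) * x, y / INR m) /\ 0 < zs m b < 1).
  assert (E : Nat.leb (S m) m = false) by (apply Nat.leb_gt; lia).
  rewrite (intOmegaPlus_hi _ _ _ _ _ E).
  rewrite S_INR.
  replace ((INR m + 1 - INR m - 1) / INR m) with 0 by (field; lra).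
  replace ((INR m + 1 - INR m) / INR m) with (1 / INR m) by (field; lra).
  split; [split; [lia|split; [split; nra|]] |].
  - split; [apply Rdiv_lt_0_compat; lra|].
    unfold Rdiv. apply Rmult_lt_compat_r; [apply Rinv_0_lt_compat|]; lra.
  - unfold zs. assert (0 < b * INR m) by nra.
    split; [apply Rdiv_lt_0_compat; nra|].
    apply (Rmult_lt_reg_r (1 - b)); [nra|]. unfold Rdiv. rewrite Rmult_assoc, Rinv_l; nra.
Qed.

Lemma fab_iter_z m a b q0 : (2 <= m)%nat -> 0 < a -> 0 < b < 1 / INR m ->
  0 < snd q0 < 1 -> forall j, 0 < snd (Nat.iter j (fab m a b) q0) < 1.
Proof.
  intros Hm Ha Hb H0 j. induction j as [|j IH]; simpl; [exact H0|].
  destruct (Nat.iter j (fab m a b) q0) as [[x y] z]. apply z_step; auto.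
Qed.

Lemma iter_fab_fst m a b j q : fst (Nat.iter j (fab m a b) q) = Nat.iter j (fa m a) (fst q).
Proof. induction j as [|j IH]; simpl; [reflexivity|]. rewrite fst_fab, IH. reflexivity. Qed.

Definition orb m a b (q0 : R * R * R) (k n : Z) : R * R * R :=
  if Z_lt_dec n (- k) then Nat.iter (Z.to_nat (- k - n)) (gb m a) q0
  else Nat.iter (Z.to_nat (n + k)) (fab m a b) q0.

Theorem proposition2p2 (m : nat) (a b : R) :
  (2 <= m)%nat -> 0 < a < 1 / INR m -> 0 < b < 1 / INR m ->
  forall w : Z -> nat,
    SigmaHC m a b w <->
    ((forall n : Z, (1 <= w n <= 2 * m)%nat) /\
     forall k : Z, (1 <= k)%Z ->
       SigmaHCplus m a (fun n : nat => w (Z.of_nat n - k)%Z)).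
Proof.
  intros Hm Ha Hb w. split.
  - intros HS. split.
    + intros n. destruct (HS (Z.to_nat (Z.abs n))) as [s [[p [Hp Hi]] Hag]].
      rewrite <- (Hag n) by lia. exact (int_bounds _ _ _ _ (Hi n)).
    + intros k Hk N. destruct (HS (N + Z.to_nat k)%nat) as [s [[p [Hp Hi]] Hag]].
      exists (fun n => s (Z.of_nat n - k)%Z). split.
      * exists (fst (p (- k)%Z)). intros n.
        rewrite (iter_fa_p m a b p Hp).
        replace (Z.of_nat n - k)%Z with (- k + Z.of_nat n)%Z by lia.
        apply intOmega_plus, Hi.
      * intros n Hn. apply Hag. lia.
  - intros [_ H] N. pose proof (proj1 Ha) as Ha0. pose proof (proj1 Hb) as Hb0.
    assert (Hm0 : 0 < INR m) by (apply lt_0_INR; lia).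
    pose proof (mb_lt1 m a ltac:(lia) (proj2 Ha)) as Hma.
    pose proof (mb_lt1 m b ltac:(lia) (proj2 Hb)) as Hmb.
    set (k := (Z.of_nat N + 1)%Z).
    destruct (H k ltac:(lia) (2 * N + 1)%nat) as [t [[[x0 y0] Ht] Hag]].
    destruct (intplus_unit m a (t O) x0 y0 ltac:(lia) (proj1 Ha) Hma (Ht O)) as [Hx0 Hy0].
    set (q0 := (x0, y0, zs m b)).
    assert (Hz0 : 0 < zs m b < 1).
    { unfold zs. assert (0 < b * INR m) by nra. assert (Hb2 : INR m >= 2) by (apply Rle_ge, (le_INR 2); lia). assert (b < 1) by nra.
      split; [apply Rdiv_lt_0_compat; nra|].
      apply (Rmult_lt_reg_r (1 - b)); [nra|]. unfold Rdiv. rewrite Rmult_assoc, Rinv_l; nra. }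
    pose proof (gb_iter_inv m a b q0 ltac:(lia) (proj1 Ha) Hma Hx0 Hy0 eq_refl) as Hinv.
    exists (fun n => if Z_lt_dec n (- k) then S m else t (Z.to_nat (n + k))). split.
    + exists (orb m a b q0 k). split.
      * intros n. unfold orb.
        destruct (Z_lt_dec n (- k)) as [Hn|Hn].
        -- assert (E : Nat.iter (Z.to_nat (- k - (n + 1))) (gb m a) q0 =
             (if Z_lt_dec (n + 1) (- k) then Nat.iter (Z.to_nat (- k - (n + 1))) (gb m a) q0
              else Nat.iter (Z.to_nat (n + 1 + k)) (fab m a b) q0)).
           { destruct (Z_lt_dec (n + 1) (- k)); [reflexivity|].
             replace (Z.to_nat (- k - (n + 1))) with O by lia.
             replace (Z.to_nat (n + 1 + k)) with O by lia. reflexivity. }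
           rewrite <- E.
           replace (Z.to_nat (- k - n)) with (S (Z.to_nat (- k - (n + 1)))) by lia.
           simpl Nat.iter at 2.
           destruct (Hinv (Z.to_nat (- k - (n + 1)))) as [A [B C]].
           destruct (Nat.iter (Z.to_nat (- k - (n + 1))) (gb m a) q0) as [[x y] z].
           simpl in A, B, C. subst z. symmetry. apply fab_gb; auto; lra.
        -- destruct (Z_lt_dec (n + 1) (- k)) as [Hn'|Hn']; [lia|].
           replace (Z.to_nat (n + 1 + k)) with (S (Z.to_nat (n + k))) by lia.
           reflexivity.
      * intros n. unfold orb. destruct (Z_lt_dec n (- k)) as [Hn|Hn].
        -- replace (Z.to_nat (- k - n)) with (S (Z.to_nat (- k - n - 1))) by lia.
           simpl Nat.iter. destruct (Hinv (Z.to_nat (- k - n - 1))) as [A [B C]].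
           apply (int_gb m a b); auto; lra.
        -- set (j := Z.to_nat (n + k)).
           pose proof (Ht j) as Hj. pose proof (iter_fab_fst m a b j q0) as F.
           change (fst q0) with (x0, y0) in F.
           pose proof (fab_iter_z m a b q0 ltac:(lia) Ha0 Hb Hz0 j) as Zb.
           destruct (Nat.iter j (fab m a b) q0) as [[x y] z].
           simpl in F, Zb. change (intOmegaPlus m a (t j) (x, y) /\ 0 < z < 1).
           rewrite F. split; assumption.
    + intros n Hn. destruct (Z_lt_dec n (- k)); [lia|].
      rewrite Hag by lia. f_equal. lia.
Qed.
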